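(* Consider the Feel-Good Thompson Sampling algorithm described in the context, run with learning rate $\eta\in(0,1]$, in the adversarial setting described there. Then $$\mathrm{Reg}_{\mathsf{MNL}}\le 12\eta NK(K+1)^4T+4\eta T+\frac{Z_T}{\eta},\qquad Z_T=-\mathbb{E}\Big[\log\mathbb{E}_{f\sim p_1}\Big[\exp\Big(-\eta\sum_{t=1}^T(\hat\ell_{t,f}-\hat\ell_{t,f^\star})\Big)\Big]\Big].$$
   Context: $N\ge K\ge1$, $\mathcal{S}$ = subsets $S\subseteq[N]$ with $1\le|S|\le K$. For $S\in\mathcal{S}$, $v\in[0,1]^N$: $\mu(S,v)$ is the distribution on $\{0,\dots,N\}$ with $\mu_i(S,v)=\frac{v_i}{1+\sum_{j\in S}v_j}$ ($i\in S$), $\mu_0(S,v)=\frac{1}{1+\sum_{j\in S}v_j}$, $0$ otherwise; $R(S,v,r)=\frac{\sum_{i\in S}r_iv_i}{1+\sum_{i\in S}v_i}$. Adversarial setting: $\mathcal{F}$ is a class of functions $\mathcal{X}\to[0,1]^N$ containing an unknown $f^\star$; at each round $t=1,\dots,T$ a context $x_t\in\mathcal{X}$ and reward vector $r_t\in[0,1]^N$ are chosen arbitrarily by an adversary (possibly depending on the past history but not on the learner's current internal randomness); the learner picks $S_t\in\mathcal{S}$ and observes $i_t\sim\mu(S_t,f^\star(x_t))$. Regret: $\mathrm{Reg}_{\mathsf{MNL}}=\mathbb{E}[\sum_{t=1}^T\max_{S}R(S,f^\star(x_t),r_t)-R(S_t,f^\star(x_t),r_t)]$. Feel-Good Thompson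 Sampling: $p_1$ is the uniform distribution over $\mathcal{F}$. At round $t$: sample $f_t\sim p_t$; receive $(x_t,r_t)$; choose $S_t\in\arg\max_{S\in\mathcal{S}}R(S,f_t(x_t),r_t)$; observe $i_t$; for each $f\in\mathcal{F}$ define $$\hat\ell_{t,f}=\frac{1}{8\eta K}\sum_{i\in S_t}\big(\mu_i(S_t,f(x_t))-\mathbb{1}[i=i_t]\big)^2-\max_{S\in\mathcal{S}}R(S,f(x_t),r_t);$$ and update $p_{t+1}(f)\propto p_t(f)\exp(-\eta\hat\ell_{t,f})$. *)

(* Defs.v *)
From HB Require Import structures.
From mathcomp Require Import all_boot all_order all_algebra.
From mathcomp Require Import reals sequences exp.
Set Implicit Arguments. Unset Strict Implicit. Unset Printing Implicit Defensive.
Import Order.TTheory GRing.Theory Num.Theory.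
Local Open Scope ring_scope.

Section MNL.
Context {R : realType} {N : nat}.

Definition validS (K : nat) (S : {set 'I_N}) : bool := (0 < #|S|)%N && (#|S| <= K)%N.

(* MNL choice distribution; outcome None is the no-purchase item 0 *)
Definition mu (S : {set 'I_N}) (v : 'I_N -> R) (i : option 'I_N) : R :=
  match i with
  | None => (1 + \sum_(j in S) v j)^-1
  | Some k => if k \in S then v k / (1 + \sum_(j in S) v j) else 0
  end.

Definition Rev (S : {set 'I_N}) (v r : 'I_N -> R) : R :=
  (\sum_(i in S) r i * v i) / (1 + \sum_(i in S) v i).

(* max over all valid assortments (all revenues are >= 0 and valid sets exist
   when 1 <= K <= N, so the neutral element 0 does not affect the value) *)
Definition maxRev (K : nat) (v r : 'I_N -> R) : R :=
  \big[Num.max/0]_(S : {set 'I_N} | validS K S) Rev S v r.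

(* One round of the interaction: sampled f_t, context x_t, rewards r_t,
   chosen assortment S_t, observed outcome i_t. *)
Record round (Fi : finType) (X : Type) := Round {
  rf : Fi; rx : X; rr : 'I_N -> R; rS : {set 'I_N}; ri : option 'I_N }.

Context {Fi : finType} {X : Type}.
Variables (K : nat) (eta : R) (eval : Fi -> X -> 'I_N -> R).

Definition lhat (rd : round Fi X) (f : Fi) : R :=
  (8 * eta * K%:R)^-1 *
    \sum_(i in rS rd) (mu (rS rd) (eval f (rx rd)) (Some i) - (ri rd == Some i)%:R) ^+ 2
  - maxRev K (eval f (rx rd)) (rr rd).

Definition p1 : Fi -> R := fun _ => (#|Fi|%:R)^-1.

Definition fgts_update (p : Fi -> R) (rd : round Fi X) : Fi -> R :=
  fun f => p f * expR (- eta * lhat rd f) /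
           \sum_(g : Fi) p g * expR (- eta * lhat rd g).

(* p_t computed from the history of the first t-1 rounds *)
Definition fgts_weights (h : seq (round Fi X)) : Fi -> R := foldl fgts_update p1 h.

Variables (fstar : Fi)
  (adv : seq (round Fi X) -> X * ('I_N -> R))
  (sel : seq (round Fi X) -> ('I_N -> R) -> ('I_N -> R) -> {set 'I_N}).

(* Expectation of g(full history) over the run of n further rounds starting
   from history h: f_t ~ p_t, adversary picks (x_t, r_t) from the past,
   S_t = sel (argmax for f_t), i_t ~ mu(S_t, f*(x_t)). *)
Fixpoint fgts_expect (n : nat) (h : seq (round Fi X)) (g : seq (round Fi X) -> R) : R :=
  match n with
  | O => g h
  | n'.+1 =>
    let xr := adv h in
    \sum_(f : Fi) fgts_weights h f *
      let S := sel h (eval f xr.1) xr.2 in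
      \sum_(i : option 'I_N) mu S (eval fstar xr.1) i *
        fgts_expect n' (rcons h (Round f xr.1 xr.2 S i)) g
  end.

Definition regret_MNL (T : nat) : R :=
  fgts_expect T [::] (fun h =>
    \sum_(rd <- h) (maxRev K (eval fstar (rx rd)) (rr rd) - Rev (rS rd) (eval fstar (rx rd)) (rr rd))).

Definition Z_T (T : nat) : R :=
  - fgts_expect T [::] (fun h =>
      ln (\sum_(f : Fi) p1 f * expR (- eta * \sum_(rd <- h) (lhat rd f - lhat rd fstar)))).

End MNL.

(* Main.v *)
Require Import Defs.
From HB Require Import structures.
From mathcomp Require Import all_boot all_order all_algebra.
From mathcomp Require Import reals sequences exp.
From mathcomp Require Import ring lra.
Import Order.TTheory GRing.Theory Num.Theory.
Local Open Scope ring_scope.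


Lemma exp_le_inv (R : realType) (x : R) : x < 1 -> expR x <= (1 - x)^-1.
Proof.
move=> hx.
have h1 : 1 - x <= expR (- x) by have := expR_ge1Dx (- x).
have hp : 0 < 1 - x by lra.
rewrite -[expR x]invrK -expRN.
by rewrite lef_pV2 // ?posrE ?expR_gt0.
Qed.

Lemma exp_quad_small (R : realType) (x : R) : x <= 1/4 -> expR x <= 1 + x + 4/3 * x^+2.
Proof.
move=> hx.
have hp : 0 < 1 - x by lra.
have e := @exp_le_inv R x ltac:(lra).
apply: (le_trans e).
rewrite -(@ler_pM2l _ (1 - x)) // mulfV ?gt_eqF //.
have : 0 <= x^+2 * (1 - 4 * x) by apply: mulr_ge0; [exact: sqr_ge0| lra].
move=> H; nra.
Qed.

Lemma exp_quad (R : realType) (x : R) : x <= 1 -> expR x <= 1 + x + 2 * x^+2.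
Proof.
move=> hx.
have -> : x = x/2 + x/2 by field.
rewrite expRD.
set y := x / 2.
have hy : y <= 1/2 by rewrite /y; lra.
have hp : 0 < 1 - y by lra.
have e1 := @exp_le_inv R y ltac:(lra).
have e0 : 0 <= expR y by exact: expR_ge0.
apply: (le_trans (ler_pM e0 e0 e1 e1)).
have -> : y + y = 2 * y by ring.
have -> : (1 - y)^-1 * (1 - y)^-1 = 1 / ((1-y)*(1-y)) by field; lra.
rewrite ler_pdivrMr ?mulr_gt0 //.
have : 0 <= y^+2 * ((1 - 2 * y) * (5 - 4 * y)) by
  apply: mulr_ge0; [exact: sqr_ge0| apply: mulr_ge0; lra].
move=> H; nra.
Qed.

Lemma exp_lb (R : realType) (x : R) : -1 <= x -> 13/48 <= expR x.
Proof.
move=> hx.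
apply: (le_trans _ (_ : expR (-1) <= expR x)); last by rewrite ler_expR.
have -> : (-1 : R) = -(1/4) + -(1/4) + (-(1/4) + -(1/4)) by field.
rewrite !expRD.
have h := expR_ge1Dx (-(1/4) : R).
have h0 : 0 <= 1 + (-(1/4) : R) by lra.
set e := expR _ in h *.
have h2 : (1 + (-(1/4)))^+2 <= e^+2 by rewrite ler_pXn2r // ?nnegrE //; lra.
have h4 : ((1 + (-(1/4)))^+2)^+2 <= (e^+2)^+2 by rewrite ler_pXn2r // ?nnegrE ?exprn_ge0 //; lra.
have -> : e * e * (e * e) = (e^+2)^+2 by rewrite !expr2.
apply: le_trans h4; lra.
Qed.

Lemma ln_le_sub1 (R : realType) (y : R) : 0 < y -> ln y <= y - 1.
Proof.
move=> hy; have := @le_ln1Dx R (y - 1) ltac:(lra).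
by rewrite addrC subrK.
Qed.

Lemma le_eq (R : numDomainType) (x y : R) : x = y -> x <= y.
Proof. by move=> ->. Qed.


Lemma alpha_abstract (R : realType) (I : finType) (S : {pred I}) (a0 : R) (a d : I -> R) (s : R) :
  0 <= a0 -> (forall k, S k -> 0 <= a k <= 1/2) -> a0 + \sum_(k | S k) a k = 1 ->
  (forall k, S k -> -1/2 <= d k <= 1/2) ->
  0 <= s <= 1/8 -> s * \sum_(k | S k) d k ^+2 <= 1/32 ->
  a0 * expR (- s * (\sum_(k | S k) d k ^+ 2 + 2 * \sum_(k | S k) a k * d k))
  + \sum_(k | S k) a k * expR (- s * (\sum_(k | S k) d k ^+ 2 + 2 * (\sum_(k | S k) a k * d k - d k)))
    <= 1 - 8/13 * s * \sum_(k | S k) d k ^+ 2.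
Proof.
move=> ha0 ha hsum hd hs hsD.
set D := \sum_(k | S k) d k ^+ 2 in hsD *.
set c := \sum_(k | S k) a k * d k.
set F := \sum_(k | S k) a k * d k ^+ 2.
set A := \sum_(k | S k) a k in hsum *.
have hA : A <= 1 by lra.
have hA0 : 0 <= A by apply: sumr_ge0 => k /ha /andP[]; lra.
have hc : -1/2 <= c.
  have : \sum_(k | S k) a k * (-1/2) <= c.
    by apply: ler_sum => k Sk; have /andP[? ?] := ha k Sk; have /andP[? ?] := hd k Sk; nra.
  by rewrite -mulr_suml -/A; lra.
have hD0 : 0 <= D by apply: sumr_ge0 => k _; exact: sqr_ge0.
have hF : F <= D / 2.
  rewrite /D /F mulr_suml; apply: ler_sum => k Sk.
  have /andP[? ?] := ha k Sk; have := sqr_ge0 (d k); nra.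
set E := expR (- s * D).
have hE0 : 0 <= E by exact: expR_ge0.
set t : R := 16/3 * s^+2.
have ht0 : 0 <= t by rewrite /t; have := sqr_ge0 s; lra.
have pw : forall z, -1 <= z -> expR (- s * (D + 2 * z)) <= E * (1 - 2 * s * z + t * z^+2).
  move=> z hz.
  have -> : - s * (D + 2 * z) = - s * D + (- 2 * s * z) by ring.
  rewrite expRD ler_wpM2l //.
  have h := @exp_quad_small R (- 2 * s * z) ltac:(nra).
  apply: (le_trans h).
  have -> : 1 + - 2 * s * z + 4 / 3 * (- 2 * s * z) ^+ 2 = 1 - 2 * s * z + t * z ^+ 2 by rewrite /t; ring.
  by [].
have step1 : a0 * expR (- s * (D + 2 * c)) + \sum_(k | S k) a k * expR (- s * (D + 2 * (c - d k)))
   <= a0 * (E * (1 - 2 * s * c + t * c^+2)) + \sum_(k | S k) a k * (E * (1 - 2 * s * (c - d k) + t * (c - d k)^+2)).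
  apply: lerD.
    by rewrite ler_wpM2l //; apply: pw; lra.
  apply: ler_sum => k Sk; rewrite ler_wpM2l //; first by have /andP[? ?] := ha k Sk; lra.
  by apply: pw; have /andP[? ?] := hd k Sk; lra.
apply: le_trans step1 _.
have step2 : \sum_(k | S k) a k * (E * (1 - 2 * s * (c - d k) + t * (c - d k)^+2))
   = E * ((1 - 2 * s * c + t * c^+2) * A + (2 * s - 2 * t * c) * c + t * F).
  rewrite (eq_bigr (fun k => E * (1 - 2 * s * c + t * c^+2) * a k + E * (2 * s - 2 * t * c) * (a k * d k)
     + E * t * (a k * d k ^+ 2))); last by move=> k _; ring.
  rewrite !big_split /= -!mulr_sumr -/A -/c -/F; ring.
rewrite step2.
have -> : a0 * (E * (1 - 2 * s * c + t * c ^+ 2)) +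
  E * ((1 - 2 * s * c + t * c ^+ 2) * A + (2 * s - 2 * t * c) * c + t * F)
  = E * (1 - t * c^+2 + t * F).
  have -> : a0 = 1 - A by lra.
  ring.
set u := s * D.
have hu0 : 0 <= u by rewrite /u; nra.
have hEu : E <= (1 + u)^-1.
  have h := expR_ge1Dx u.
  rewrite /E mulNr -/u expRN lef_pV2 ?posrE ?expR_gt0 //; lra.
have htF : t * F <= u / 3.
  have : t * F <= t * (D / 2) by rewrite ler_wpM2l.
  rewrite /t /u; move=> h; apply: (le_trans h).
  have : s * (s * D) <= 1/8 * (s * D) by rewrite ler_wpM2r //; lra.
  nra.
have hpos : 0 <= 1 - t * c ^+ 2 + t * F.
  have : t * c^+2 <= t * (1/4).
    rewrite ler_wpM2l //.
    have : c <= 1/2.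
      have : c <= \sum_(k | S k) a k * (1/2).
        by apply: ler_sum => k Sk; have /andP[? ?] := ha k Sk; have /andP[? ?] := hd k Sk; nra.
      rewrite -mulr_suml -/A; lra.
    nra.
  have : t * F >= 0 by apply: mulr_ge0 => //; apply: sumr_ge0 => k Sk; have /andP[? ?] := ha k Sk; have := sqr_ge0 (d k); nra.
  rewrite /t; move=> *; have : s^+2 <= 1/64 by nra.
  nra.
apply: (le_trans (ler_wpM2r hpos hEu)).
have h1u : 0 < 1 + u by lra.
rewrite mulrC ler_pdivrMr //.
have : 1 - t * c ^+ 2 + t * F <= 1 + u / 3 by have := sqr_ge0 c; nra.
have : u <= 1/32 by rewrite /u.
have : 8 / 13 * s * D = 8/13 * u by rewrite /u; ring.
move=> -> h1 h2.
have : u * u <= u * (1/32) by rewrite ler_wpM2l.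
nra.
Qed.

Set Implicit Arguments. Unset Strict Implicit.


Lemma sum_option (R : realType) (T : finType) (F : option T -> R) :
  \sum_(i : option T) F i = F None + \sum_(k : T) F (Some k).
Proof.
rewrite (bigD1 None) //=; congr (_ + _).
rewrite (reindex_omap Some id) /=; last by case.
by apply: eq_bigl => k; rewrite eqxx.
Qed.

Definition Lsq (R : realType) (N : nat) (S : {set 'I_N}) (v : 'I_N -> R) (i : option 'I_N) : R :=
  \sum_(j in S) (mu S v (Some j) - (i == Some j)%:R) ^+ 2.
Definition Dist (R : realType) (N : nat) (S : {set 'I_N}) (v w : 'I_N -> R) : R :=
  \sum_(j in S) (mu S v (Some j) - mu S w (Some j)) ^+ 2.

Lemma sumS_ge (R : realType) (N : nat) (S : {set 'I_N}) (v : 'I_N -> R) k :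
  (forall j, 0 <= v j <= 1) -> k \in S -> v k <= \sum_(j in S) v j.
Proof.
move=> hv kS; rewrite (bigD1 k) //= lerDl; apply: sumr_ge0 => j _.
by have /andP[] := hv j.
Qed.

Lemma sumS_ge0 (R : realType) (N : nat) (S : {set 'I_N}) (v : 'I_N -> R) :
  (forall j, 0 <= v j <= 1) -> 0 <= \sum_(j in S) v j.
Proof. by move=> hv; apply: sumr_ge0 => j _; have /andP[] := hv j. Qed.

Lemma mu_half (R : realType) (N : nat) (S : {set 'I_N}) (v : 'I_N -> R) k :
  (forall j, 0 <= v j <= 1) -> k \in S ->
  0 <= mu S v (Some k) <= 1/2.
Proof.
move=> hv kS; rewrite /= kS.
have h1 := sumS_ge hv kS; have /andP[h2 h3] := hv k.
have hp : 0 < 1 + \sum_(j in S) v j by lra.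
apply/andP; split; first by apply: divr_ge0 => //; lra.
rewrite ler_pdivrMr //; lra.
Qed.

Lemma mu_sum1 (R : realType) (N : nat) (S : {set 'I_N}) (v : 'I_N -> R) :
  (forall j, 0 <= v j <= 1) ->
  mu S v None + \sum_(j in S) mu S v (Some j) = 1.
Proof.
move=> hv; have h0 := sumS_ge0 S hv.
rewrite [X in _ + X](eq_bigr (fun j => v j / (1 + \sum_(j in S) v j))); last by move=> j jS; rewrite /= jS.
rewrite /=.
rewrite -mulr_suml; field; lra.
Qed.

Lemma alpha_mnl (R : realType) (N K : nat) (S : {set 'I_N}) (v w : 'I_N -> R) :
  validS K S -> (forall j, 0 <= v j <= 1) -> (forall j, 0 <= w j <= 1) ->
  \sum_(i : option 'I_N) mu S w i * expR (- (8 * K%:R)^-1 * (Lsq S v i - Lsq S w i))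
   <= 1 - (13 * K%:R)^-1 * Dist S v w.
Proof.
move=> /andP[hS0 hSK] hv hw.
have hK : (1 <= K)%N by apply: leq_trans hS0 hSK.
have hKR : 1 <= (K%:R : R) by rewrite ler1n.
set s := (8 * K%:R)^-1.
pose m j := mu S v (Some j). pose ms j := mu S w (Some j).
pose d j := m j - ms j.
pose c := \sum_(j in S) ms j * d j. pose D := \sum_(j in S) d j ^+2.
have eqNone : Lsq S v None - Lsq S w None = D + 2 * c.
  rewrite /Lsq -sumrB /D /c mulr_sumr -big_split; apply: eq_bigr => j _ /=.
  rewrite /d /m /ms /=; ring.
have eqSome : forall k, k \in S -> Lsq S v (Some k) - Lsq S w (Some k) = D + 2 * (c - d k).
  move=> k kS.
  have hk : \sum_(j in S) (k == j)%:R * d j = d k.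
    rewrite (bigD1 k) //= eqxx mul1r big1 ?addr0 // => j /andP[_ /negbTE].
    by rewrite eq_sym => ->; rewrite mul0r.
  rewrite mulrBr -hk /Lsq -sumrB /D /c mulr_sumr mulr_sumr -sumrB -big_split.
  apply: eq_bigr => j _.
  have -> : (Some k == Some j) = (k == j) by [].
  rewrite /d /m /ms; move: (mu S v (Some j)) (mu S w (Some j)) => x y /=; ring.
rewrite sum_option eqNone.
rewrite (_ : \sum_(k : 'I_N) _ = \sum_(k in S) ms k * expR (- s * (D + 2 * (c - d k)))); last first.
  rewrite [RHS]big_mkcond; apply: eq_bigr => k _; case: ifP => kS.
    by rewrite eqSome.
  by rewrite /= kS mul0r.
have hw0 := sumS_ge0 S hw.
have H := @alpha_abstract R _ (fun k => k \in S) (mu S w None) ms d s.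
have := mu_sum1 S hw => hsum.
have hms : forall k, k \in S -> 0 <= ms k <= 1/2 by move=> k kS; exact: mu_half hw kS.
have hm : forall k, k \in S -> 0 <= m k <= 1/2 by move=> k kS; exact: mu_half hv kS.
have hd : forall k, k \in S -> -1/2 <= d k <= 1/2.
  move=> k kS; have /andP[? ?] := hms k kS; have /andP[? ?] := hm k kS.
  by apply/andP; rewrite /d; split; lra.
have hs : 0 <= s <= 1/8.
  apply/andP; split; first by rewrite /s invr_ge0; lra.
  by rewrite /s div1r lef_pV2 ?posrE; lra.
have hD : D <= K%:R / 4.
  apply: (le_trans (y := \sum_(j in S) (1/4 : R))).
    apply: ler_sum => j jS; have /andP[? ?] := hd j jS; nra.
  rewrite sumr_const -mulr_natr.
  have : (#|S|%:R : R) <= K%:R by rewrite ler_nat.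
  lra.
have hsD : s * D <= 1/32.
  apply: (le_trans (y := s * (K%:R / 4))); first by rewrite ler_wpM2l //; have /andP[] := hs.
  rewrite /s; apply: le_eq; field; lra.
have ha0 : 0 <= mu S w None by rewrite /= invr_ge0; lra.
have H' := H ha0 hms hsum hd hs hsD.
apply: (le_trans H').
apply: le_eq; rewrite /s /Dist -/D; field; lra.
Qed.


Lemma cs_sum (R : realType) (I : finType) (P : {pred I}) (x : I -> R) :
  (\sum_(i | P i) x i) ^+ 2 <= #|P|%:R * \sum_(i | P i) x i ^+ 2.
Proof.
have H : 0 <= \sum_(i | P i) \sum_(j | P j) (x i - x j) ^+ 2.
  by apply: sumr_ge0 => i _; apply: sumr_ge0 => j _; exact: sqr_ge0.
have E : \sum_(i | P i) \sum_(j | P j) (x i - x j) ^+ 2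
   = 2 * (#|P|%:R * \sum_(i | P i) x i ^+ 2) - 2 * (\sum_(i | P i) x i) ^+ 2.
  have E1 : forall i, \sum_(j | P j) (x i - x j) ^+ 2
     = #|P|%:R * x i ^+ 2 - 2 * x i * (\sum_(j | P j) x j) + \sum_(j | P j) x j ^+ 2.
    move=> i.
    rewrite (eq_bigr (fun j => x i ^+ 2 + (- 2 * x i) * x j + x j ^+ 2)); last by move=> j _; ring.
    rewrite !big_split /= sumr_const -mulr_sumr mulr_natl; ring.
  rewrite (eq_bigr _ (fun i _ => E1 i)) !big_split /= -mulr_sumr.
  rewrite sumr_const mulr_natl.
  rewrite [X in _ + X + _](eq_bigr (fun i => (- 2 * (\sum_(j | P j) x j)) * x i)); last by move=> i _; ring.
  rewrite -mulr_sumr; ring.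
rewrite E in H; lra.
Qed.

Lemma gap_bound (R : realType) (N : nat) (S : {set 'I_N}) (v w r : 'I_N -> R) :
  (forall j, 0 <= v j <= 1) -> (forall j, 0 <= w j <= 1) -> (forall j, 0 <= r j <= 1) ->
  Rev S v r - Rev S w r <= \sum_(j in S) `|v j - w j|.
Proof.
move=> hv hw hr.
have hsv0 := sumS_ge0 S hv; have hsw0 := sumS_ge0 S hw.
rewrite /Rev.
set sv := \sum_(j in S) v j in hsv0 *; set sw := \sum_(j in S) w j in hsw0 *.
set srv := \sum_(j in S) r j * v j; set srw := \sum_(j in S) r j * w j.
set Rw := srw / (1 + sw).
have hsrw : 0 <= srw <= sw.
  apply/andP; split; first by apply: sumr_ge0 => j _; have /andP[? ?] := hr j; have /andP[? ?] := hw j; nra.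
  by apply: ler_sum => j _; have /andP[? ?] := hr j; have /andP[? ?] := hw j; nra.
have hRw : 0 <= Rw <= 1.
  have /andP[? ?] := hsrw.
  apply/andP; split; first by apply: divr_ge0; lra.
  by rewrite /Rw ler_pdivrMr; lra.
have hsum : \sum_(j in S) (v j - w j) * (r j - Rw) = srv - srw - Rw * (sv - sw).
  rewrite (eq_bigr (fun j => (r j * v j - r j * w j) + (- Rw) * (v j - w j))); last by move=> j _; ring.
  rewrite big_split /= sumrB -mulr_sumr sumrB -/srv -/srw -/sv -/sw; ring.
have key : srv / (1 + sv) - Rw = (\sum_(j in S) (v j - w j) * (r j - Rw)) / (1 + sv).
  rewrite hsum /Rw; field; lra.
rewrite key.
have hX : \sum_(j in S) (v j - w j) * (r j - Rw) <= \sum_(j in S) `|v j - w j|.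
  apply: ler_sum => j _.
  apply: (le_trans (ler_norm _)); rewrite normrM.
  have : `|r j - Rw| <= 1.
    by rewrite ler_norml; have /andP[? ?] := hr j; have /andP[? ?] := hRw; apply/andP; split; lra.
  have := normr_ge0 (v j - w j); nra.
have hY : 0 <= \sum_(j in S) `|v j - w j| by apply: sumr_ge0 => j _; exact: normr_ge0.
rewrite ler_pdivrMr; last lra.
nra.
Qed.

Lemma delta_bound (R : realType) (N K : nat) (S : {set 'I_N}) (v w : 'I_N -> R) :
  validS K S -> (forall j, 0 <= v j <= 1) -> (forall j, 0 <= w j <= 1) ->
  \sum_(j in S) (v j - w j) ^+ 2 <= (K%:R + 1) ^+ 4 * Dist S v w.
Proof.
move=> /andP[hS0 hSK] hv hw.
have hK : (1 <= K)%N by apply: leq_trans hS0 hSK.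
have hKR : 1 <= (K%:R : R) by rewrite ler1n.
have hSKR : (#|S|%:R : R) <= K%:R by rewrite ler_nat.
have hsv0 := sumS_ge0 S hv; have hsw0 := sumS_ge0 S hw.
set sv := \sum_(j in S) v j in hsv0 *; set sw := \sum_(j in S) w j in hsw0 *.
set k : R := K%:R in hKR hSKR *.
have hsvK : sv <= k.
  apply: (le_trans (y := \sum_(j in S) (1 : R))); first by apply: ler_sum => j _; have /andP[] := hv j.
  by rewrite sumr_const -mulr_natr mul1r.
pose dm j := v j / (1 + sv) - w j / (1 + sw).
pose D := \sum_(j in S) dm j ^+ 2.
have hDist : Dist S v w = D.
  by rewrite /Dist /D; apply: eq_bigr => j jS; rewrite /= jS.
rewrite hDist.
pose tau := \sum_(j in S) dm j.
have htau : tau = sv / (1 + sv) - sw / (1 + sw).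
  by rewrite /tau /dm sumrB -!mulr_suml.
have hid : forall j, v j - w j = (1 + sv) * (dm j + w j * tau).
  move=> j; rewrite htau /dm; field; lra.
have hD0 : 0 <= D by apply: sumr_ge0 => j _; exact: sqr_ge0.
have htau2 : tau ^+ 2 <= k * D.
  have := cs_sum (mem S) dm.
  move=> h; apply: (le_trans h); rewrite -/D.
  by apply: ler_wpM2r.
have hw2 : \sum_(j in S) w j ^+ 2 <= k.
  apply: (le_trans (y := \sum_(j in S) (1 : R))).
    by apply: ler_sum => j _; have /andP[? ?] := hw j; nra.
  by rewrite sumr_const -mulr_natr mul1r.
set A := 1 + sv in hid hsvK *.
have hA : 1 <= A <= k + 1 by apply/andP; split; rewrite /A; lra.
have pw : forall j, k * (v j - w j) ^+ 2 <= A ^+ 2 * (k * (k + 1) * dm j ^+ 2 + (k + 1) * tau ^+ 2 * w j ^+ 2).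
  move=> j; rewrite hid.
  have : 0 <= (k * dm j - w j * tau) ^+ 2 by exact: sqr_ge0.
  have : 0 <= A ^+ 2 by exact: sqr_ge0.
  move=> h1 h2.
  have -> : k * (A * (dm j + w j * tau)) ^+ 2 = A ^+ 2 * (k * (dm j + w j * tau) ^+ 2) by ring.
  rewrite ler_wpM2l //.
  nra.
have hsum : k * \sum_(j in S) (v j - w j) ^+ 2 <= A ^+ 2 * (k * (k + 1) * D + (k + 1) * tau ^+ 2 * \sum_(j in S) w j ^+ 2).
  rewrite mulr_sumr /D !mulr_sumr -big_split mulr_sumr /=.
  by apply: ler_sum => j _; apply: (le_trans (pw j)); apply: le_eq; ring.
have hb : (k + 1) * tau ^+ 2 * \sum_(j in S) w j ^+ 2 <= (k + 1) * (k * D) * k.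
  apply: ler_pM; [| |by rewrite ler_wpM2l ?(le_trans _ hKR) ?ler_wpM2l; lra| done].
    apply: mulr_ge0; [lra|exact: sqr_ge0].
  by apply: sumr_ge0 => j _; exact: sqr_ge0.
have hA2 : A ^+ 2 <= (k + 1) ^+ 2.
  have /andP[? ?] := hA; rewrite ler_pXn2r // ?nnegrE; lra.
have h2 : k * \sum_(j in S) (v j - w j) ^+ 2 <= k * ((k + 1) ^+ 4 * D).
  apply: (le_trans hsum).
  have -> : k * ((k + 1) ^+ 4 * D) = (k + 1) ^+ 2 * (k * (k + 1) * D + (k + 1) * (k * D) * k) by ring.
  apply: ler_pM.
  - exact: sqr_ge0.
  - have := sqr_ge0 tau; have : 0 <= \sum_(j in S) w j ^+ 2 by apply: sumr_ge0 => j _; exact: sqr_ge0.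
    move=> *; have : 0 <= (k + 1) * tau ^+ 2 * \sum_(j in S) w j ^+ 2.
      apply: mulr_ge0 => //; apply: mulr_ge0; lra.
    have : 0 <= k * (k + 1) * D by apply: mulr_ge0 => //; apply: mulr_ge0; lra.
    lra.
  - done.
  - lra.
rewrite ler_pM2l in h2 => //; lra.
Qed.


Lemma sum_ind (R : realType) (N : nat) (S : {set 'I_N}) (F : 'I_N -> R) :
  \sum_(j in S) F j = \sum_j (j \in S)%:R * F j.
Proof.
rewrite big_mkcond; apply: eq_bigr => j _; case: (j \in S) => /=; ring.
Qed.

Lemma amgm (R : realType) (c x : R) : 0 < c -> `|x| <= c / 2 + x ^+ 2 / (2 * c).
Proof.
move=> hc.
have h := sqr_ge0 (c - `|x|).
have hx : `|x| ^+ 2 = x ^+ 2 by rewrite real_normK ?num_real.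
rewrite -hx.
rewrite -(@ler_pM2l _ (2 * c)); last lra.
have -> : 2 * c * (c / 2 + `|x| ^+ 2 / (2 * c)) = c ^+ 2 + `|x| ^+ 2 by field; lra.
nra.
Qed.

Lemma decouple_j (R : realType) (Fi : finType) (p : Fi -> R) (ind dl : Fi -> R) (beta : R) :
  (forall f, 0 <= p f) -> (forall f, 0 <= ind f <= 1) -> (forall f, ind f = 0 \/ ind f = 1) -> 0 < beta ->
  \sum_f p f * (ind f * `|dl f|) <=
   beta / 2 + (2 * beta)^-1 * ((\sum_f p f * ind f) * \sum_g p g * dl g ^+ 2).
Proof.
move=> hp hind h01 hb.
set q := \sum_f p f * ind f.
have hq0 : 0 <= q by apply: sumr_ge0 => f _; have /andP[? ?] := hind f; apply: mulr_ge0.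
have hE0 : 0 <= \sum_g p g * dl g ^+ 2 by apply: sumr_ge0 => g _; apply: mulr_ge0 => //; exact: sqr_ge0.
have hR0 : 0 <= beta / 2 + (2 * beta)^-1 * (q * \sum_g p g * dl g ^+ 2).
  apply: addr_ge0; first lra.
  apply: mulr_ge0; [rewrite invr_ge0; lra| exact: mulr_ge0].
case: (eqVneq q 0) => hq.
  have hnn : forall g, predT g -> 0 <= p g * ind g.
    by move=> g _; have /andP[? ?] := hind g; exact: mulr_ge0.
  have z := psumr_eq0P hnn hq.
  rewrite big1 //.
  by move=> f _; rewrite mulrA z // mul0r.
have hqp : 0 < q by rewrite lt_def hq hq0.
set c := beta / q.
have hc : 0 < c by apply: divr_gt0.
apply: (le_trans (y := \sum_f (c / 2 * (p f * ind f) + (2 * c)^-1 * (p f * dl f ^+ 2)))).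
  apply: ler_sum => f _.
  have := amgm (dl f) hc; have /andP[? ?] := hind f; have := hp f.
  case: (h01 f) => ->; rewrite ?mul0r ?mulr0 ?mul1r ?mulr1 => h1 h2.
    have : 0 <= p f * dl f ^+ 2 by apply: mulr_ge0 => //; exact: sqr_ge0.
    have : 0 <= (2 * c)^-1 by rewrite invr_ge0; lra.
    move=> ? ?; rewrite add0r; exact: mulr_ge0.
  have -> : c / 2 * p f + (2 * c)^-1 * (p f * dl f ^+ 2) = p f * (c / 2 + dl f ^+ 2 / (2 * c)) by ring.
  by rewrite ler_wpM2l.
rewrite big_split /= -!mulr_sumr -/q.
apply: le_eq; rewrite /c; field; rewrite hq andbT; by apply: lt0r_neq0.
Qed.

Lemma decouple (R : realType) (Fi : finType) (N : nat) (p : Fi -> R) (Sf : Fi -> {set 'I_N})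
  (dl : Fi -> 'I_N -> R) (beta : R) :
  (forall f, 0 <= p f) -> 0 < beta ->
  \sum_f p f * \sum_(j in Sf f) `|dl f j| <=
   N%:R * beta / 2 + (2 * beta)^-1 * \sum_f \sum_g p f * p g * \sum_(j in Sf f) dl g j ^+ 2.
Proof.
move=> hp hb.
have e1 : \sum_f p f * \sum_(j in Sf f) `|dl f j|
    = \sum_j \sum_f p f * ((j \in Sf f)%:R * `|dl f j|).
  rewrite exchange_big /=; apply: eq_bigr => f _; by rewrite sum_ind mulr_sumr.
have e2 : \sum_f \sum_g p f * p g * \sum_(j in Sf f) dl g j ^+ 2
    = \sum_j ((\sum_f p f * (j \in Sf f)%:R) * \sum_g p g * dl g j ^+ 2).
  under eq_bigr => f _ do under eq_bigr => g _ do rewrite sum_ind mulr_sumr.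
  under eq_bigr => f _ do rewrite exchange_big /=.
  rewrite exchange_big /=; apply: eq_bigr => j _.
  rewrite mulr_suml; apply: eq_bigr => f _; rewrite mulr_sumr; apply: eq_bigr => g _; ring.
rewrite e1 e2.
apply: (le_trans (y := \sum_(j : 'I_N) (beta / 2 + (2 * beta)^-1 * ((\sum_f p f * (j \in Sf f)%:R) * \sum_g p g * dl g j ^+ 2)))).
  apply: ler_sum => j _; apply: decouple_j => //.
    by move=> f; case: (j \in Sf f) => /=; lra.
  by move=> f; case: (j \in Sf f); [right|left].
rewrite big_split /= -mulr_sumr sumr_const card_ord; apply: le_eq.
rewrite -mulr_sumr -mulr_natr; ring.
Qed.


Lemma Rev_bounds (R : realType) (N : nat) (S : {set 'I_N}) (v r : 'I_N -> R) :
  (forall j, 0 <= v j <= 1) -> (forall j, 0 <= r j <= 1) -> 0 <= Rev S v r <= 1.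
Proof.
move=> hv hr; have h0 := sumS_ge0 S hv.
have h1 : 0 <= \sum_(i in S) r i * v i.
  by apply: sumr_ge0 => j _; have /andP[? ?] := hr j; have /andP[? ?] := hv j; nra.
have h2 : \sum_(i in S) r i * v i <= \sum_(i in S) v i.
  by apply: ler_sum => j _; have /andP[? ?] := hr j; have /andP[? ?] := hv j; nra.
rewrite /Rev; apply/andP; split; first by apply: divr_ge0; lra.
rewrite ler_pdivrMr; lra.
Qed.

Lemma maxRev_sel (R : realType) (N K : nat) (S0 : {set 'I_N}) (v r : 'I_N -> R) :
  (forall j, 0 <= v j <= 1) -> (forall j, 0 <= r j <= 1) ->
  validS K S0 /\ (forall S, validS K S -> Rev S v r <= Rev S0 v r) ->
  maxRev K v r = Rev S0 v r.
Proof.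
move=> hv hr [hS0 hmax].
have /andP[h0 _] := Rev_bounds S0 hv hr.
apply/eqP; rewrite eq_le; apply/andP; split.
  by apply: bigmax_le => // S hS; exact: hmax.
by rewrite /maxRev; exact: (le_bigmax_cond 0 (fun S => Rev S v r) hS0).
Qed.

Lemma mu_ge0 (R : realType) (N : nat) (S : {set 'I_N}) (w : 'I_N -> R) i :
  (forall j, 0 <= w j <= 1) -> 0 <= mu S w i.
Proof.
move=> hw; case: i => [k|] /=.
  case: ifP => kS; last by [].
  by have /andP[] := mu_half hw kS; rewrite /= kS.
by rewrite invr_ge0; have := sumS_ge0 S hw; lra.
Qed.

Lemma mu_total (R : realType) (N : nat) (S : {set 'I_N}) (w : 'I_N -> R) :
  (forall j, 0 <= w j <= 1) -> \sum_i mu S w i = 1.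
Proof.
move=> hw; rewrite sum_option -(mu_sum1 S hw); congr (_ + _).
rewrite [RHS]big_mkcond; apply: eq_bigr => k _ /=; by case: ifP.
Qed.

Lemma sum_pos (R : realType) (Fi : finType) (p e : Fi -> R) :
  (forall g, 0 <= p g) -> \sum_g p g = 1 -> (forall g, 0 < e g) -> 0 < \sum_g p g * e g.
Proof.
move=> hp hs he.
have hnn : forall g, predT g -> 0 <= p g * e g by move=> g _; apply: mulr_ge0 => //; exact: ltW.
rewrite lt_def sumr_ge0 ?andbT; last by move=> g _; exact: hnn.
apply/negP => /eqP h0.
have z := psumr_eq0P hnn h0.
have : \sum_g p g = 0.
  rewrite big1 // => g _.
  have := z g isT => /eqP; rewrite mulf_eq0 => /orP[/eqP //|].
  by rewrite gt_eqF.
by rewrite hs => /eqP; rewrite oner_eq0.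
Qed.

Section Main.
Variables (R : realType) (N K : nat) (Fi : finType) (X : Type) (eval : Fi -> X -> 'I_N -> R)
  (fstar : Fi) (eta : R).
Hypotheses (hK : (1 <= K)%N) (he0 : 0 < eta) (he1 : eta <= 1)
  (hev : forall f x i, 0 <= eval f x i <= 1).

Local Notation l := (lhat K eta eval).

Lemma lhat_diff f x r S i g :
  - eta * (l (Round f x r S i) g - l (Round f x r S i) fstar)
   = - (8 * K%:R)^-1 * (Lsq S (eval g x) i - Lsq S (eval fstar x) i)
     + eta * (maxRev K (eval g x) r - maxRev K (eval fstar x) r).
Proof.
have hKR : 1 <= (K%:R : R) by rewrite ler1n.
rewrite /lhat /Lsq /=; field; rewrite pnatr_eq0 -lt0n hK /=; exact: lt0r_neq0.
Qed.

Lemma per_f (p : Fi -> R) (x : X) (r : 'I_N -> R) (S : {set 'I_N}) (f : Fi) (c0 : R) :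
  (forall g, 0 <= p g) -> \sum_g p g = 1 -> validS K S ->
  (forall g, 0 <= maxRev K (eval g x) r <= 1) ->
  \sum_i mu S (eval fstar x) i * (c0 + eta^-1 * ln (\sum_g p g *
       expR (- eta * (l (Round f x r S i) g - l (Round f x r S i) fstar))))
  <= c0 + \sum_g p g * (maxRev K (eval g x) r - maxRev K (eval fstar x) r) + 2 * eta
     - (48 * K%:R * eta)^-1 * \sum_g p g * Dist S (eval g x) (eval fstar x).
Proof.
move=> hp hs hS hmR.
have hKR : 1 <= (K%:R : R) by rewrite ler1n.
set vs := eval fstar x.
have hvs : forall j, 0 <= vs j <= 1 by move=> j; exact: hev.
pose dR g := maxRev K (eval g x) r - maxRev K vs r.
pose a g i := expR (- (8 * K%:R)^-1 * (Lsq S (eval g x) i - Lsq S vs i)).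
pose b g := expR (eta * dR g).
have hY : forall i, \sum_g p g * expR (- eta * (l (Round f x r S i) g - l (Round f x r S i) fstar))
    = \sum_g p g * (b g * a g i).
  move=> i; apply: eq_bigr => g _; rewrite lhat_diff expRD; congr (_ * _); exact: mulrC.
under eq_bigr => i _ do rewrite hY.
have hpos : forall i, 0 < \sum_g p g * (b g * a g i).
  by move=> i; apply: sum_pos => // g; apply: mulr_gt0; exact: expR_gt0.
have hie : 0 <= eta^-1 by rewrite invr_ge0; exact: ltW.
apply: (le_trans (y := \sum_i mu S vs i * (c0 + eta^-1 * (\sum_g p g * (b g * a g i) - 1)))).
  apply: ler_sum => i _; apply: ler_wpM2l; first exact: mu_ge0.
  rewrite lerD2l ler_wpM2l //; exact: ln_le_sub1.
have e1 : \sum_i mu S vs i * (c0 + eta^-1 * (\sum_g p g * (b g * a g i) - 1))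
   = c0 + eta^-1 * (\sum_g p g * b g * (\sum_i mu S vs i * a g i) - 1).
  rewrite (eq_bigr (fun i => c0 * mu S vs i - eta^-1 * mu S vs i
       + eta^-1 * \sum_g (p g * b g) * (mu S vs i * a g i))); last first.
    move=> i _.
    have -> : \sum_g p g * b g * (mu S vs i * a g i) = mu S vs i * \sum_g p g * (b g * a g i).
      rewrite mulr_sumr; apply: eq_bigr => g _; ring.
    ring.
  rewrite !big_split /= -!mulr_sumr mu_total // exchange_big /=.
  under [X in _ = _ + _ * (X - _)]eq_bigr => g _ do rewrite mulr_sumr.
  rewrite sumrN -mulr_sumr mu_total //; ring.
rewrite e1.
have hC : forall g, p g * b g * (\sum_i mu S vs i * a g i)
    <= p g * (1 + eta * dR g + 2 * eta ^+ 2 - (48 * K%:R)^-1 * Dist S (eval g x) vs).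
  move=> g.
  have hal := alpha_mnl (v := eval g x) (w := vs) hS (hev g x) hvs.
  have hb0 : 0 <= b g by exact: expR_ge0.
  have hD0 : 0 <= Dist S (eval g x) vs by apply: sumr_ge0 => j _; exact: sqr_ge0.
  have hdR : -1 <= dR g <= 1.
    have /andP[? ?] := hmR g; have /andP[? ?] := hmR fstar.
    by apply/andP; rewrite /dR /vs; split; lra.
  have /andP[hdR1 hdR2] := hdR.
  have hx1 : eta * dR g <= 1.
    have : eta * dR g <= eta * 1 by rewrite ler_wpM2l // ltW.
    by rewrite mulr1 => h; exact: le_trans h he1.
  have hx2 : -1 <= eta * dR g.
    have : eta * (-1) <= eta * dR g by rewrite ler_wpM2l // ltW.
    rewrite mulrN1 => h; apply: le_trans h; by rewrite lerN2.
  have hbu := @exp_quad R _ hx1.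
  have hbl := @exp_lb R _ hx2.
  have hsq : (eta * dR g) ^+ 2 <= eta ^+ 2.
    have : dR g ^+ 2 <= 1 by nra.
    rewrite exprMn => h; have := sqr_ge0 eta; nra.
  rewrite -mulrA ler_wpM2l //.
  apply: (le_trans (ler_wpM2l hb0 hal)).
  rewrite -/(b g) in hbu hbl.
  set D := Dist S (eval g x) vs in hD0 *.
  have hK13 : (13 * K%:R)^-1 * D * (13 / 48) = (48 * K%:R)^-1 * D.
    field; rewrite pnatr_eq0 -lt0n hK //.
  have hK0 : 0 <= (13 * K%:R)^-1 * D by apply: mulr_ge0 => //; rewrite invr_ge0; lra.
  nra.
apply: (le_trans (y := c0 + eta^-1 * (\sum_g p g * (1 + eta * dR g + 2 * eta ^+ 2
      - (48 * K%:R)^-1 * Dist S (eval g x) vs) - 1))).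
  rewrite lerD2l ler_wpM2l // lerD2r; apply: ler_sum => g _; exact: hC.
apply: le_eq.
rewrite (eq_bigr (fun g => (1 + 2 * eta ^+ 2) * p g + eta * (p g * dR g)
     - (48 * K%:R)^-1 * (p g * Dist S (eval g x) vs))); last by move=> g _; ring.
rewrite big_split big_split /= -!mulr_sumr hs /dR /vs.
rewrite sumrN -mulr_sumr; field.
by rewrite pnatr_eq0 -lt0n hK andbT; exact: lt0r_neq0.
Qed.

Lemma one_step (p : Fi -> R) (x : X) (r : 'I_N -> R) (Sf : Fi -> {set 'I_N}) :
  (forall g, 0 <= p g) -> \sum_g p g = 1 -> (forall j, 0 <= r j <= 1) ->
  (forall g, validS K (Sf g) /\ maxRev K (eval g x) r = Rev (Sf g) (eval g x) r) ->
  (forall g, 0 <= maxRev K (eval g x) r <= 1) ->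
  \sum_f p f * \sum_i mu (Sf f) (eval fstar x) i *
     ((maxRev K (eval fstar x) r - Rev (Sf f) (eval fstar x) r) + eta^-1 * ln (\sum_g p g *
        expR (- eta * (l (Round f x r (Sf f) i) g - l (Round f x r (Sf f) i) fstar))))
  <= (12 * N%:R * K%:R * (K%:R + 1) ^+ 4 + 4) * eta.
Proof.
move=> hp hs hr hSf hmR.
have hKR : 1 <= (K%:R : R) by rewrite ler1n.
set vs := eval fstar x.
pose dR g := maxRev K (eval g x) r - maxRev K vs r.
pose M := \sum_g p g * dR g.
pose c := (48 * K%:R * eta)^-1.
pose DD f := \sum_g p g * Dist (Sf f) (eval g x) vs.
apply: (le_trans (y := \sum_f p f * ((maxRev K vs r - Rev (Sf f) vs r) + M + 2 * eta - c * DD f))).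
  apply: ler_sum => f _; apply: ler_wpM2l => //.
  by apply: per_f => //; case: (hSf f).
pose gap f := Rev (Sf f) (eval f x) r - Rev (Sf f) vs r.
have e1 : \sum_f p f * ((maxRev K vs r - Rev (Sf f) vs r) + M + 2 * eta - c * DD f)
    = \sum_f p f * gap f + 2 * eta - c * \sum_f p f * DD f.
  rewrite (eq_bigr (fun f => p f * gap f - p f * dR f + (M + 2 * eta) * p f - c * (p f * DD f))); last first.
    move=> f _; rewrite /gap /dR; case: (hSf f) => _ ->; ring.
  rewrite !big_split /= sumrN -!mulr_sumr hs -/M; rewrite sumrN -mulr_sumr; ring.
rewrite e1.
set beta := 24 * K%:R * (K%:R + 1) ^+ 4 * eta.
have hK1 : 1 <= (K%:R + 1) ^+ 4 :> R by rewrite exprn_ege1 //; lra.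
have hbeta : 0 < beta.
  by rewrite /beta; apply: mulr_gt0 => //; apply: mulr_gt0; lra.
pose Q := \sum_f \sum_g p f * p g * Dist (Sf f) (eval g x) vs.
have hQ : \sum_f p f * DD f = Q.
  by apply: eq_bigr => f _; rewrite /DD mulr_sumr; apply: eq_bigr => g _; rewrite mulrA.
rewrite hQ.
have hgap : \sum_f p f * gap f <= \sum_f p f * \sum_(j in Sf f) `|eval f x j - vs j|.
  apply: ler_sum => f _; apply: ler_wpM2l => //; apply: gap_bound => //; exact: hev.
have hdec := decouple Sf (fun f j => eval f x j - vs j) hp hbeta.
have hdel : \sum_f \sum_g p f * p g * \sum_(j in Sf f) (eval g x j - vs j) ^+ 2
    <= (K%:R + 1) ^+ 4 * Q.
  rewrite /Q mulr_sumr; apply: ler_sum => f _; rewrite mulr_sumr; apply: ler_sum => g _.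
  rewrite mulrCA; apply: ler_wpM2l; first by apply: mulr_ge0.
  apply: delta_bound; [by case: (hSf f)| exact: hev| exact: hev].
have hib : 0 <= (2 * beta)^-1 by rewrite invr_ge0; lra.
have hfin : \sum_f p f * gap f <= N%:R * beta / 2 + (2 * beta)^-1 * ((K%:R + 1) ^+ 4 * Q).
  apply: (le_trans hgap); apply: (le_trans hdec).
  by rewrite lerD2l ler_wpM2l.
have hc : (2 * beta)^-1 * ((K%:R + 1) ^+ 4 * Q) = c * Q.
  rewrite /beta /c; field.
  by rewrite pnatr_eq0 -lt0n hK /= !gt_eqF //; lra.
rewrite hc in hfin.
have -> : (12 * N%:R * K%:R * (K%:R + 1) ^+ 4 + 4) * eta = N%:R * beta / 2 + 2 * eta + 2 * eta.
  by rewrite /beta; field.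
have := ltW he0.
lra.
Qed.
End Main.


Section Main2.
Variables (R : realType) (N K : nat) (Fi : finType) (X : Type) (eval : Fi -> X -> 'I_N -> R)
  (fstar : Fi) (eta : R)
  (adv : seq (@round R N Fi X) -> X * ('I_N -> R))
  (sel : seq (@round R N Fi X) -> ('I_N -> R) -> ('I_N -> R) -> {set 'I_N}).
Hypotheses (hK : (1 <= K)%N) (he0 : 0 < eta) (he1 : eta <= 1)
  (hev : forall f x i, 0 <= eval f x i <= 1)
  (hadv : forall h i, 0 <= (adv h).2 i <= 1)
  (hsel : forall h v r, validS K (sel h v r) /\
     forall S, validS K S -> Rev S v r <= Rev (sel h v r) v r).

Local Notation l := (lhat K eta eval).
Local Notation rnd := (@round R N Fi X).

Lemma p1_pos (g : Fi) : 0 < p1 g :> R.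
Proof.
rewrite /p1 invr_gt0 ltr0n; apply/card_gt0P; by exists fstar.
Qed.

Lemma p1_sum : \sum_(g : Fi) p1 g = 1 :> R.
Proof.
have h : (0 < #|Fi|)%N by apply/card_gt0P; exists fstar.
have hc : (#|Fi|%:R : R)^-1 *+ #|Fi| = 1 by rewrite -(mulr_natr (#|Fi|%:R : R)^-1) mulVf // pnatr_eq0 -lt0n.
by rewrite /p1 sumr_const; exact: hc.
Qed.

Definition Wt (h : seq rnd) : R :=
  \sum_(g : Fi) p1 g * expR (- eta * \sum_(rd <- h) (l rd g - l rd fstar)).

Lemma Wt_pos h : 0 < Wt h.
Proof.
apply: sum_pos => //; [by move=> g; exact: ltW (p1_pos g) | exact: p1_sum | by move=> g; exact: expR_gt0].
Qed.

Lemma Wt_nil : Wt [::] = 1.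
Proof.
rewrite /Wt -[RHS]p1_sum; apply: eq_bigr => g _; by rewrite big_nil mulr0 expR0 mulr1.
Qed.

Lemma weights_eq h f :
  fgts_weights K eta eval h f = p1 f * expR (- eta * \sum_(rd <- h) (l rd f - l rd fstar)) / Wt h.
Proof.
elim/last_ind: h f => [|h rd IH] f.
  by rewrite Wt_nil big_nil mulr0 expR0 mulr1 divr1.
rewrite /fgts_weights foldl_rcons -/(fgts_weights K eta eval h) /fgts_update.
have hW := Wt_pos h.
set E := fun g => expR (- eta * \sum_(rd0 <- h) (l rd0 g - l rd0 fstar)).
set d := fun g => expR (- eta * (l rd g - l rd fstar)).
set kap := expR (- eta * l rd fstar).
have he : forall g, expR (- eta * l rd g) = d g * kap.
  by move=> g; rewrite /d /kap -expRD; congr expR; ring.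
have hr : forall g, expR (- eta * \sum_(rd0 <- rcons h rd) (l rd0 g - l rd0 fstar)) = E g * d g.
  by move=> g; rewrite big_rcons /= /E /d -expRD; congr expR; ring.
have hWr : Wt (rcons h rd) = \sum_g p1 g * E g * d g.
  by rewrite /Wt; apply: eq_bigr => g _; rewrite hr mulrA.
under eq_bigr => g _ do rewrite IH he.
rewrite IH he hr hWr.
have hZ : 0 < \sum_g p1 g * E g * d g.
  rewrite -hWr; exact: Wt_pos.
rewrite (eq_bigr (fun g => (p1 g * E g * d g) * (kap / Wt h))); last first.
  by move=> g _; rewrite /E; ring.
rewrite -mulr_suml.
have hk : 0 < kap by exact: expR_gt0.
have -> : expR (- eta * \sum_(rd0 <- h) (l rd0 f - l rd0 fstar)) = E f by [].
field; apply/andP; split; [exact: lt0r_neq0 | apply/andP; split; exact: lt0r_neq0].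
Qed.

Lemma weights_ge0 h f : 0 <= fgts_weights K eta eval h f.
Proof.
rewrite weights_eq; apply: divr_ge0; last exact: ltW (Wt_pos h).
apply: mulr_ge0; [exact: ltW (p1_pos f)| exact: expR_ge0].
Qed.

Lemma weights_sum h : \sum_(f : Fi) fgts_weights K eta eval h f = 1.
Proof.
under eq_bigr => f _ do rewrite weights_eq.
rewrite -mulr_suml -/(Wt h) mulfV //; exact: lt0r_neq0 (Wt_pos h).
Qed.

Lemma Wt_rcons h rd : Wt (rcons h rd) =
  Wt h * \sum_(g : Fi) fgts_weights K eta eval h g * expR (- eta * (l rd g - l rd fstar)).
Proof.
under [in RHS]eq_bigr => g _ do rewrite weights_eq.
rewrite mulr_sumr /Wt; apply: eq_bigr => g _.
rewrite big_rcons /=.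
have hW := Wt_pos h.
rewrite -/(Wt h).
have -> : - eta * (\sum_(rd0 <- h) (l rd0 g - l rd0 fstar) + (l rd g - l rd fstar))
  = - eta * \sum_(rd0 <- h) (l rd0 g - l rd0 fstar) + - eta * (l rd g - l rd fstar) by ring.
rewrite expRD; field; exact: lt0r_neq0.
Qed.

Definition Ah (h : seq rnd) : R := \sum_(rd <- h)
  (maxRev K (eval fstar (rx rd)) (rr rd) - Rev (rS rd) (eval fstar (rx rd)) (rr rd)).
Definition Phi (h : seq rnd) : R := Ah h + eta^-1 * ln (Wt h).

Lemma Phi_rcons h rd : Phi (rcons h rd) = Phi h
  + (maxRev K (eval fstar (rx rd)) (rr rd) - Rev (rS rd) (eval fstar (rx rd)) (rr rd))
  + eta^-1 * ln (\sum_(g : Fi) fgts_weights K eta eval h g * expR (- eta * (l rd g - l rd fstar))).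
Proof.
rewrite /Phi /Ah big_rcons /= Wt_rcons lnM; first ring.
  by rewrite posrE; exact: Wt_pos.
rewrite posrE; apply: sum_pos; [exact: weights_ge0| exact: weights_sum| by move=> g; exact: expR_gt0].
Qed.

Definition Cc : R := 12 * N%:R * K%:R * (K%:R + 1) ^+ 4 + 4.

Lemma claim n : forall h, fgts_expect K eta eval fstar adv sel n h Phi <= Phi h + n%:R * (Cc * eta).
Proof.
elim: n => [|n IH] h /=.
  by rewrite mul0r addr0.
set x := (adv h).1; set r := (adv h).2.
set w := fgts_weights K eta eval h.
pose Z f := \sum_i mu (sel h (eval f x) r) (eval fstar x) i *
   ((maxRev K (eval fstar x) r - Rev (sel h (eval f x) r) (eval fstar x) r) + eta^-1 * ln (\sum_g w g *
        expR (- eta * (l (Round f x r (sel h (eval f x) r) i) g - l (Round f x r (sel h (eval f x) r) i) fstar)))).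
have hr : forall j, 0 <= r j <= 1 by move=> j; exact: hadv.
have hvs : forall j, 0 <= eval fstar x j <= 1 by move=> j; exact: hev.
apply: (le_trans (y := \sum_f w f * ((Phi h + n%:R * (Cc * eta)) + Z f))).
  apply: ler_sum => f _; apply: ler_wpM2l; first exact: weights_ge0.
  set c := Phi h + n%:R * (Cc * eta).
  set S0 := sel h (eval f x) r.
  pose zz i := (maxRev K (eval fstar x) r - Rev S0 (eval fstar x) r) + eta^-1 * ln (\sum_g w g *
        expR (- eta * (l (Round f x r S0 i) g - l (Round f x r S0 i) fstar))).
  change (\sum_i mu S0 (eval fstar x) i * fgts_expect K eta eval fstar adv sel n
     (rcons h (Round f x r S0 i)) Phi <= c + \sum_i mu S0 (eval fstar x) i * zz i).
  apply: (le_trans (y := \sum_i mu S0 (eval fstar x) i * (c + zz i))).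
    apply: ler_sum => i _; apply: ler_wpM2l; first exact: mu_ge0.
    apply: (le_trans (IH _)); rewrite Phi_rcons /= /c /zz; apply: le_eq; ring.
  apply: le_eq.
  under eq_bigr => i _ do rewrite mulrDr.
  by rewrite big_split /= -mulr_suml mu_total // mul1r.
rewrite (eq_bigr (fun f => (Phi h + n%:R * (Cc * eta)) * w f + w f * Z f)); last by move=> f _; ring.
rewrite big_split /= -mulr_sumr weights_sum mulr1 -natr1.
have hos : \sum_f w f * Z f <= Cc * eta.
  apply: one_step => //.
  - exact: weights_ge0.
  - exact: weights_sum.
  - move=> g; split; first by case: (hsel h (eval g x) r).
    apply: maxRev_sel => //; exact: hev.
  - move=> g; rewrite (maxRev_sel (fun j => hev g x j) hr (hsel h (eval g x) r)).
    by apply: Rev_bounds => //; exact: hev.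
have : Phi h + n%:R * (Cc * eta) + \sum_f w f * Z f <= Phi h + n%:R * (Cc * eta) + Cc * eta by rewrite lerD2l.
move=> H; apply: (le_trans H); apply: le_eq; ring.
Qed.

Lemma expect_ext n : forall h (F G : seq rnd -> R), (forall h, F h = G h) ->
  fgts_expect K eta eval fstar adv sel n h F = fgts_expect K eta eval fstar adv sel n h G.
Proof.
elim: n => [|n IH] h F G hFG /=; first exact: hFG.
apply: eq_bigr => f _; congr (_ * _); apply: eq_bigr => i _; congr (_ * _); exact: IH.
Qed.

Lemma expect_lin n : forall h (F G : seq rnd -> R) (a b : R),
  fgts_expect K eta eval fstar adv sel n h (fun h => a * F h + b * G h)
  = a * fgts_expect K eta eval fstar adv sel n h F + b * fgts_expect K eta eval fstar adv sel n h G.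
Proof.
elim: n => [|n IH] h F G a b /=; first by [].
under eq_bigr => f _ do under eq_bigr => i _ do rewrite IH.
rewrite !mulr_sumr -big_split /=; apply: eq_bigr => f _.
rewrite !big_distrr /= -big_split /=; apply: eq_bigr => i _; ring.
Qed.

Lemma final_bound T :
  regret_MNL K eta eval fstar adv sel T
    <= 12 * eta * N%:R * K%:R * (K%:R + 1) ^+ 4 * T%:R + 4 * eta * T%:R
       + Z_T K eta eval fstar adv sel T / eta.
Proof.
have hc := claim T [::].
have hPhi0 : Phi [::] = 0 by rewrite /Phi /Ah big_nil Wt_nil ln1 mulr0 addr0.
rewrite hPhi0 add0r in hc.
rewrite (@expect_ext T [::] Phi (fun h => 1 * Ah h + eta^-1 * ln (Wt h))) in hc; last first.
  by move=> h; rewrite /Phi mul1r.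
rewrite expect_lin mul1r in hc.
have -> : regret_MNL K eta eval fstar adv sel T = fgts_expect K eta eval fstar adv sel T [::] Ah by [].
have -> : Z_T K eta eval fstar adv sel T = - fgts_expect K eta eval fstar adv sel T [::] (fun h => ln (Wt h)) by [].
set E1 := fgts_expect _ _ _ _ _ _ _ _ Ah in hc *.
set E2 := fgts_expect _ _ _ _ _ _ _ _ (fun h => ln (Wt h)) in hc *.
have -> : - E2 / eta = - (eta^-1 * E2) by rewrite mulrC mulrN.
have -> : 12 * eta * N%:R * K%:R * (K%:R + 1) ^+ 4 * T%:R + 4 * eta * T%:R = T%:R * (Cc * eta)
  by rewrite /Cc; ring.
lra.
Qed.
End Main2.

Unset Implicit Arguments.

Theorem theorem6 (R : realType) (N K : nat) (Fi : finType) (X : Type)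
  (eval : Fi -> X -> 'I_N -> R) (fstar : Fi) (eta : R) (T : nat)
  (adv : seq (@round R N Fi X) -> X * ('I_N -> R))
  (sel : seq (@round R N Fi X) -> ('I_N -> R) -> ('I_N -> R) -> {set 'I_N}) :
  (1 <= K)%N -> (K <= N)%N ->
  0 < eta -> eta <= 1 ->
  injective eval ->
  (forall f x i, 0 <= eval f x i <= 1) ->
  (forall h i, 0 <= (adv h).2 i <= 1) ->
  (forall h v r, validS K (sel h v r) /\
     forall S, validS K S -> Rev S v r <= Rev (sel h v r) v r) ->
  regret_MNL K eta eval fstar adv sel T
    <= 12 * eta * N%:R * K%:R * (K%:R + 1) ^+ 4 * T%:R + 4 * eta * T%:R
       + Z_T K eta eval fstar adv sel T / eta.
Proof.
move=> hK _ he0 he1 _ hev hadv hsel.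
exact: final_bound.
Qed.
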